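(* Let $r\ge 2$, $d\ge 1$ be integers and $n=(r-1)d+1$. Let $F_1,\ldots,F_n\subset\mathbb{R}^d$ be pairwise disjoint sets, each of cardinality $r$, such that the coordinates of all points of $F_1\cup\cdots\cup F_n$ are algebraically independent, and let $M\subset[n]$. Then there is a colourful partition $A_1,\ldots,A_r$ of $F_1\cup\cdots\cup F_n$ (so $|F_i\cap A_j|=1$; write $F_i\cap A_j=\{x_{i,j}\}$), a point $z\in\mathbb{R}^d$ and real numbers $\alpha_1,\ldots,\alpha_n$ such that \[ z=\sum_{i=1}^n\alpha_i\,x_{i,j}\quad\text{and}\quad \sum_{i=1}^n\alpha_i=1\qquad\text{for all } j\in[r], \] and either ($\alpha_i>0$ for all $i\in M$ and $\alpha_i<0$ for all $i\in[n]\setminus M$) or ($\alpha_i<0$ for all $i\in M$ and $\alpha_i>0$ for all $i\in[n]\setminus M$). In particular the coefficient of $x_{i,j}$ in the affine combination for $A_j$ is $\alpha_i$, independent of $j$.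
   Context: $[n]=\{1,\ldots,n\}$. The sets $F_i$ are regarded as colour classes; a colourful partition of them into $r$ sets is a partition $A_1,\ldots,A_r$ of $F_1\cup\cdots\cup F_n$ with $|F_i\cap A_j|=1$ for all $i\in[n]$, $j\in[r]$. *)

(* Defs.v *)
From Stdlib Require Import Reals ZArith.
From mathcomp Require Import all_boot all_fingroup.
Set Implicit Arguments. Unset Strict Implicit. Unset Printing Implicit Defensive.

Definition rsum (I : finType) (F : I -> R) : R := foldr (fun i acc => Rplus (F i) acc) R0 (enum I).
Definition rprod (I : finType) (F : I -> R) : R := foldr (fun i acc => Rmult (F i) acc) R1 (enum I).

(* A polynomial with integer coefficients in the variables indexed by the
   finite type I, given as a list of (coefficient, exponent vector) terms. *)
Definition mpolyZ (I : finType) := seq (Z * {ffun I -> nat}).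

Definition mpeval (I : finType) (P : mpolyZ I) (x : I -> R) : R :=
  foldr (fun (m : Z * {ffun I -> nat}) acc => Rplus (Rmult (IZR m.1) (rprod (fun i : I => pow (x i) (m.2 i)))) acc) R0 P.

Definition mpoly_nonzero (I : finType) (P : mpolyZ I) : Prop :=
  P <> [::] /\ uniq (map snd P) /\ List.Forall (fun m => m.1 <> 0%Z) P.

(* The family x of reals is algebraically independent (over Q, equivalently
   over Z): no nonzero integer polynomial vanishes at x. *)
Definition alg_indep (I : finType) (x : I -> R) : Prop :=
  forall P : mpolyZ I, mpoly_nonzero P -> mpeval P x <> R0.

(* Main.v *)
Require Import Defs.
From Stdlib Require Import Reals ZArith.
From mathcomp Require Import all_boot all_fingroup.
From mathcomp Require Import all_order all_algebra.
From mathcomp Require Import all_classical all_reals all_analysis Rstruct.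
From mathcomp Require Import ring lra.
Set Implicit Arguments. Unset Strict Implicit. Unset Printing Implicit Defensive.
Import GRing.Theory Num.Theory.

Section PolyF.
Variable I : finType.
Local Open Scope ring_scope.

Definition mono (e : {ffun I -> nat}) (x : I -> R) : R := \prod_(i : I) (pow (x i) (e i)).

Lemma rprodE (F : I -> R) : rprod F = \prod_(i : I) F i.
Proof.
rewrite /rprod -big_enum /=.
by elim: (enum I) => [|a l IH]; rewrite ?big_nil ?big_cons //= IH.
Qed.

Lemma rsumE (F : I -> R) : rsum F = \sum_(i : I) F i.
Proof.
rewrite /rsum -big_enum /=.
by elim: (enum I) => [|a l IH]; rewrite ?big_nil ?big_cons //= IH.
Qed.

Lemma mpevalE (P : mpolyZ I) x :
  mpeval P x = \sum_(t <- P) IZR t.1 * mono t.2 x.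
Proof.
elim: P => [|t P IH]; rewrite ?big_nil ?big_cons //= IH rprodE //.
Qed.

Definition is_polyf (f : (I -> R) -> R) := exists P : mpolyZ I, forall x, mpeval P x = f x.

Lemma polyf_ext f g : is_polyf f -> (forall x, f x = g x) -> is_polyf g.
Proof. by move=> [P HP] fg; exists P => x; rewrite HP. Qed.

Lemma mono0 x : mono [ffun=> 0%N] x = 1.
Proof. by rewrite /mono big1 // => i _; rewrite ffunE. Qed.

Lemma polyf_const (z : Z) : is_polyf (fun _ => IZR z).
Proof. exists [:: (z, [ffun=> 0%N])] => x; rewrite mpevalE big_cons big_nil /= mono0. by rewrite mulr1 addr0. Qed.

Lemma polyf_var (i : I) : is_polyf (fun x => x i).
Proof.
exists [:: (Zpos xH, [ffun j => nat_of_bool (j == i)])] => x.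
rewrite mpevalE big_cons big_nil /= addr0 mul1r /mono (bigD1 i) //= ffunE eqxx /=.
rewrite big1 ?mulr1; first by rewrite Rmult_1_r.
by move=> j /negbTE ji; rewrite ffunE ji.
Qed.

Lemma polyf_add f g : is_polyf f -> is_polyf g -> is_polyf (fun x => f x + g x).
Proof.
move=> [P HP] [Q HQ]; exists (P ++ Q) => x.
by rewrite mpevalE big_cat /= -!mpevalE HP HQ.
Qed.

Lemma monoD (e1 e2 : {ffun I -> nat}) x : mono [ffun i => (e1 i + e2 i)%N] x = mono e1 x * mono e2 x.
Proof.
rewrite /mono -big_split /=; apply: eq_bigr => i _.
by rewrite ffunE pow_add.
Qed.

Lemma polyf_mul f g : is_polyf f -> is_polyf g -> is_polyf (fun x => f x * g x).
Proof.
move=> [P HP] [Q HQ].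
exists [seq (Z.mul a.1 b.1, [ffun i => (a.2 i + b.2 i)%N]) | a : Z * {ffun I -> nat} <- P, b : Z * {ffun I -> nat} <- Q] => x.
rewrite -HP -HQ !mpevalE.
elim: P {HP} => [|a P IH]; first by rewrite big_nil mul0r.
rewrite /= big_cat big_cons IH mulrDl; congr (_ + _).
rewrite big_map mulr_sumr; apply: eq_bigr => b _ /=.
by rewrite monoD mult_IZR; rewrite -!mulrA; congr (_ * _); rewrite mulrCA.
Qed.

Lemma polyf_opp f : is_polyf f -> is_polyf (fun x => - f x).
Proof.
move=> Hf; apply: (@polyf_ext (fun x => IZR (-1) * f x)); first exact: polyf_mul (polyf_const _) Hf.
by move=> x; rewrite (_ : IZR (-1) = -1) ?mulN1r.
Qed.
Lemma dummy0 : True. Proof. by [].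
Qed.

Lemma polyf_sum (J : Type) (s : seq J) (F : J -> (I -> R) -> R) :
  (forall j, is_polyf (F j)) -> is_polyf (fun x => \sum_(j <- s) F j x).
Proof.
move=> HF; elim: s => [|j s IH].
  by apply: (@polyf_ext (fun _ => IZR 0)); [exact: polyf_const| move=> x; rewrite big_nil].
apply: (@polyf_ext (fun x => F j x + \sum_(j <- s) F j x)); first exact: polyf_add.
by move=> x; rewrite big_cons.
Qed.

Lemma polyf_prod (J : Type) (s : seq J) (F : J -> (I -> R) -> R) :
  (forall j, is_polyf (F j)) -> is_polyf (fun x => \prod_(j <- s) F j x).
Proof.
move=> HF; elim: s => [|j s IH].
  by apply: (@polyf_ext (fun _ => IZR 1)); [exact: polyf_const| move=> x; rewrite big_nil].
apply: (@polyf_ext (fun x => F j x * \prod_(j <- s) F j x)); first exact: polyf_mul.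
by move=> x; rewrite big_cons.
Qed.

Definition coefZ (P : mpolyZ I) (e : {ffun I -> nat}) : Z :=
  foldr (fun t acc => if t.2 == e then Z.add t.1 acc else acc) Z0 P.

Definition normP (P : mpolyZ I) : mpolyZ I :=
  [seq (coefZ P e, e) | e <- [seq e <- undup (map snd P) | ~~ Z.eqb (coefZ P e) Z0]].

Lemma coefZE P e : IZR (coefZ P e) = \sum_(t <- P | t.2 == e) IZR t.1.
Proof.
elim: P => [|t P IH]; rewrite ?big_nil ?big_cons //=.
by case: (t.2 == e); rewrite ?plus_IZR IH.
Qed.

Lemma in_aux (L : seq {ffun I -> nat}) (uL : uniq L) (Q : mpolyZ I) (G : Z * {ffun I -> nat} -> R) :
  all (fun t => t.2 \in L) Q -> \sum_(t <- Q) G t = \sum_(t <- Q) \sum_(e <- L | t.2 == e) G t.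
Proof.
elim: Q => [|t Q IH] /=; first by rewrite !big_nil.
move=> /andP[tin aQ]; rewrite !big_cons IH //; congr (_ + _).
rewrite -big_filter.
have -> : [seq i <- L | t.2 == i] = [:: t.2].
  rewrite -(filter_pred1_uniq uL tin); apply: eq_filter => e /=.
  by rewrite eq_sym.
by rewrite big_seq1.
Qed.

Lemma normP_eval P x : mpeval (normP P) x = mpeval P x.
Proof.
rewrite !mpevalE /normP big_map big_filter.
have -> : \sum_(t <- P) IZR t.1 * mono t.2 x =
   \sum_(e <- undup (map snd P)) \sum_(t <- P | t.2 == e) IZR t.1 * mono t.2 x.
  rewrite (exchange_big_dep predT) //= (@in_aux (undup (map snd P))) ?undup_uniq //.
  have := @all_map _ _ snd (fun e => e \in undup (map snd P)) P; rewrite /preim /= => <-.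
  by apply/allP => e; rewrite mem_undup.
rewrite big_mkcond /=; apply: eq_bigr => e _.
have -> : \sum_(t <- P | t.2 == e) IZR t.1 * mono t.2 x = IZR (coefZ P e) * mono e x.
  rewrite coefZE big_distrl /=; apply: eq_bigr => t /eqP -> //.
case: Z.eqb_spec => [-> |] //=.
by rewrite mul0r.
Qed.

Lemma normP_nonzero P : normP P = [::] \/ mpoly_nonzero (normP P).
Proof.
case E: (normP P) => [|t Q]; [by left | right].
rewrite -E; split; first by rewrite E.
split.
  rewrite /normP -map_comp map_id_in ?filter_uniq ?undup_uniq //.
rewrite /normP; apply/List.Forall_forall => m /(@List.in_map_iff) [e [<- /(@List.filter_In) [_ He]]] /=.
by move/negP: He => He; move/Z.eqb_eq.
Qed.

Lemma polyf_nonvanish f : is_polyf f -> (exists y, f y <> 0) ->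
  forall x, alg_indep x -> f x <> 0.
Proof.
move=> [P HP] [y fy] x Hx.
case: (normP_nonzero P) => [E | NZ].
  by move: fy; rewrite -HP -normP_eval E.
by rewrite -HP -normP_eval; apply: Hx.
Qed.
End PolyF.
Import Order.TTheory GRing.Theory Num.Theory.
Import numFieldNormedType.Exports.
Local Open Scope classical_set_scope.
Local Open Scope ring_scope.

Section CC.
Variable R : realType.

Definition dot N (u v : 'rV[R]_N) := \sum_k u 0 k * v 0 k.

Lemma dot_expand N (p w : 'rV[R]_N) t :
  dot (p + t *: w) (p + t *: w) = dot p p + t * (2 * dot p w) + t ^+ 2 * dot w w.
Proof.
rewrite /dot !mulr_sumr -!big_split /=; apply: eq_bigr => k _; rewrite !mxE; ring.
Qed.

Lemma dot_ge0 N (u : 'rV[R]_N) : 0 <= dot u u.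
Proof. by apply: sumr_ge0 => k _; rewrite -expr2 sqr_ge0. Qed.

Lemma dot_eq0 N (u : 'rV[R]_N) : dot u u = 0 -> u = 0.
Proof.
move=> /psumr_eq0P H; apply/rowP => k; rewrite mxE.
have /eqP := H (fun k _ => ltac:(by rewrite -expr2 sqr_ge0)) k isT.
by rewrite mulf_eq0 orbb => /eqP.
Qed.

Lemma step N (p q : 'rV[R]_N) : dot p q < dot p p ->
  exists t, 0 < t <= 1 /\ dot (p + t *: (q - p)) (p + t *: (q - p)) < dot p p.
Proof.
move=> H.
have Hdq : dot p (q - p) = dot p q - dot p p.
  by rewrite /dot -sumrB; apply: eq_bigr => k _; rewrite !mxE; ring.
set a := dot p p - dot p q; set b := dot (q - p) (q - p).
have a0 : 0 < a by rewrite subr_gt0.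
have b0 : 0 <= b by apply: dot_ge0.
have ab0 : 0 < a + b by rewrite ltr_wpDr.
exists (a / (a + b)).
have t0 : 0 < a / (a + b) by rewrite divr_gt0.
have tab : a / (a + b) * (a + b) = a by rewrite divfK // gt_eqF.
split; first by rewrite t0 /= ler_pdivrMr // mul1r lerDl.
rewrite dot_expand Hdq.
set t := a / (a + b) in t0 tab *.
have -> : dot p q - dot p p = - a by rewrite /a opprB.
have e : t ^+ 2 * b = t * a - t ^+ 2 * a.
  have tb : t * b = a - t * a by rewrite -[X in X - _]tab; ring.
  by rewrite expr2 -mulrA tb; ring.
rewrite e.
have : 0 < t * a by rewrite mulr_gt0.
have : 0 < t ^+ 2 * a by rewrite mulr_gt0 // exprn_gt0.
lra.
Qed.


Definition pt N M (s : 'I_M -> 'rV[R]_N) (l : 'rV[R]_M) : 'rV[R]_N := \sum_i l 0 i *: s i.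
Definition simp M (l : 'rV[R]_M) := (forall i, 0 <= l 0 i) /\ \sum_i l 0 i = 1.

Lemma cont_sum (T : topologicalType) (I : Type) (s : seq I) (F : I -> T -> R) :
  (forall i, continuous (F i)) -> continuous (fun x => \sum_(i <- s) F i x).
Proof.
move=> HF; elim: s => [|i s IH].
  rewrite (_ : (fun x => _) = fun _ => 0); first exact: cst_continuous.
  by apply: funext => x; rewrite big_nil.
rewrite (_ : (fun x => _) = (F i + fun x => \sum_(j <- s) F j x)); last first.
  by apply: funext => x; rewrite big_cons.
by move=> x; apply: continuousD; [exact: HF | exact: IH].
Qed.

Lemma ptE N M (s : 'I_M -> 'rV[R]_N) l k : pt s l 0 k = \sum_i l 0 i * s i 0 k.
Proof. by rewrite /pt summxE; apply: eq_bigr => i _; rewrite mxE. Qed.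

Lemma minimizer N M (s : 'I_M.+1 -> 'rV[R]_N) : exists l, simp l /\
  forall l', simp l' -> dot (pt s l) (pt s l) <= dot (pt s l') (pt s l').
Proof.
set A := [set l : 'rV[R]_M.+1 | simp l].
have A0 : A !=set0.
  exists (\row_i (i == ord0)%:R); split => [i|]; first by rewrite mxE ler0n.
  rewrite (bigD1 ord0) //= big1 ?mxE ?addr0 // => i /negbTE; rewrite mxE => ->.
  done.
have cA : compact A.
  apply: (@subclosed_compact _ _ [set v : 'rV[R]_M.+1 | forall i, `[0, 1]%classic (v ord0 i)]).
  - have -> : A = (\bigcap_(i in setT) [set l : 'rV[R]_M.+1 | 0 <= l 0 i]) `&`
                 ((fun l : 'rV[R]_M.+1 => \sum_i l 0 i) @^-1` [set x | x = 1]).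
      apply/seteqP; split => l.
        by move=> [H1 H2]; split => //= i _; apply: H1.
      by move=> [H1 H2]; split => // i; apply: H1.
    apply: closedI.
      apply: closed_bigI => i _.
      apply: (@preimage_closed _ _ (fun l : 'rV[R]_M.+1 => l 0 i) [set x | 0 <= x]).
        by move=> x _; apply: coord_continuous.
      exact: closed_ge.
    apply: preimage_closed; last exact: closed_eq.
    move=> x _; apply: (@cont_sum _ _ _ (fun i (l : 'rV[R]_M.+1) => l 0 i)) => i.
    exact: coord_continuous.
  - apply: (@rV_compact _ _ (fun=> `[(0:R), 1]%classic)) => i; exact: segment_compact.
  - move=> l [H1 H2] i /=; rewrite in_itv /= H1 /= -H2.
    rewrite (bigD1 i) //= lerDl; apply: sumr_ge0 => j _; exact: H1.
have cf : {within A, continuous (fun l => dot (pt s l) (pt s l))}.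
  apply: continuous_subspaceT.
  rewrite /dot.
  apply: (@cont_sum _ _ _ (fun k l => pt s l 0 k * pt s l 0 k)) => k.
  have ck : continuous (fun l : 'rV[R]_M.+1 => pt s l 0 k).
    rewrite (_ : (fun l => _) = fun l : 'rV[R]_M.+1 => \sum_i l 0 i * s i 0 k); last first.
      by apply: funext => l; rewrite ptE.
    apply: cont_sum => i x; apply: continuousM; first exact: coord_continuous.
    exact: cst_continuous.
  by move=> x; apply: continuousM; apply: ck.
have [l lA Hl] := EVT_min_rV A0 cA cf.
exists l; split; first by move: lA; rewrite inE.
by move=> l' Hl'; apply: Hl; rewrite inE.
Qed.


Lemma ptD N M (s : 'I_M -> 'rV[R]_N) l1 l2 : pt s (l1 + l2) = pt s l1 + pt s l2.
Proof. by rewrite /pt -big_split /=; apply: eq_bigr => i _; rewrite mxE scalerDl. Qed.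

Lemma ptZ N M (s : 'I_M -> 'rV[R]_N) a l : pt s (a *: l) = a *: pt s l.
Proof. by rewrite /pt scaler_sumr; apply: eq_bigr => i _; rewrite mxE scalerA. Qed.

Lemma ptN N M (s : 'I_M -> 'rV[R]_N) l : pt s (- l) = - pt s l.
Proof. by rewrite -scaleN1r ptZ scaleN1r. Qed.

Definition delta M (j : 'I_M) : 'rV[R]_M := \row_k (k == j)%:R.

Lemma pt_delta N M (s : 'I_M -> 'rV[R]_N) j : pt s (delta j) = s j.
Proof.
rewrite /pt (bigD1 j) //= big1 ?addr0 ?mxE ?eqxx ?scale1r // => i /negbTE.
by rewrite mxE => ->; rewrite scale0r.
Qed.

Lemma simp_delta M (j : 'I_M) : simp (delta j).
Proof.
split => [i|]; first by rewrite mxE ler0n.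
rewrite (bigD1 j) //= big1 ?mxE ?eqxx ?addr0 // => i /negbTE.
by rewrite mxE => ->.
Qed.

Lemma simp_comb M (l1 l2 : 'rV[R]_M) t : simp l1 -> simp l2 -> 0 <= t <= 1 ->
  simp ((1 - t) *: l1 + t *: l2).
Proof.
move=> [a1 b1] [a2 b2] /andP[t0 t1]; split => [i|].
  rewrite !mxE; apply: addr_ge0; apply: mulr_ge0 => //; by rewrite subr_ge0.
rewrite (eq_bigr (fun i => (1 - t) * l1 0 i + t * l2 0 i)); last by move=> i _; rewrite !mxE.
by rewrite big_split /= -!mulr_sumr b1 b2 !mulr1 subrK.
Qed.

Lemma dotC N (u v : 'rV[R]_N) : dot u v = dot v u.
Proof. by apply: eq_bigr => k _; rewrite mulrC. Qed.

Lemma dot_pt N M (p : 'rV[R]_N) (s : 'I_M -> 'rV[R]_N) l :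
  dot p (pt s l) = \sum_i l 0 i * dot p (s i).
Proof.
rewrite /dot (eq_bigr (fun k => \sum_i p 0 k * (l 0 i * s i 0 k))); last first.
  by move=> k _; rewrite ptE mulr_sumr.
rewrite exchange_big /=; apply: eq_bigr => i _; rewrite mulr_sumr.
by apply: eq_bigr => k _; ring.
Qed.

Lemma comb_pt N M (s : 'I_M -> 'rV[R]_N) l j t :
  pt s ((1 - t) *: l + t *: delta j) = pt s l + t *: (s j - pt s l).
Proof.
rewrite ptD !ptZ pt_delta scalerBl scale1r scalerBr.
set a := pt s l; set b := s j.
by rewrite addrAC addrA.
Qed.

Lemma fin_min (T : finType) (P : pred T) (F : T -> R) (x0 : T) : P x0 ->
  exists2 x, P x & forall y, P y -> F x <= F y.
Proof.
move=> Px0; case: (@arg_minP _ _ T x0 P F Px0) => x Px H.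
by exists x.
Qed.

Lemma reduce N M (s : 'I_M -> 'rV[R]_N) (l u : 'rV[R]_M) :
  simp l -> u != 0 -> \sum_j u 0 j = 0 -> pt s u = 0 ->
  exists l1, [/\ simp l1, pt s l1 = pt s l & exists i, l1 0 i = 0].
Proof.
move=> [l0 l1] u0 su pu.
have [j uj] : exists j, 0 < u 0 j.
  apply/not_existsP => H.
  have H' : forall j, 0 <= - u 0 j by move=> j; rewrite oppr_ge0 leNgt; apply/negP/H.
  have : \sum_j - u 0 j = 0 by rewrite sumrN su oppr0.
  move/psumr_eq0P => /(_ (fun j _ => H' j)) Z.
  move/negP: u0; apply; apply/eqP/rowP => k; rewrite mxE.
  by apply/eqP; rewrite -oppr_eq0; apply/eqP/Z.
have [js ujs Hjs] := @fin_min _ (fun j => 0 < u 0 j) (fun j => l 0 j / u 0 j) j uj.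
set t := l 0 js / u 0 js.
have t0 : 0 <= t by rewrite divr_ge0 // ltW.
exists (l - t *: u); split.
- split => [i|].
    rewrite !mxE subr_ge0.
    case: (ltrP 0 (u 0 i)) => ui.
      by rewrite -ler_pdivlMr //; apply: Hjs.
    by apply: (le_trans _ (l0 i)); rewrite mulr_ge0_le0.
  under eq_bigr do rewrite !mxE.
  by rewrite sumrB -mulr_sumr su mulr0 subr0.
- by rewrite ptD ptN ptZ pu scaler0 subr0.
- by exists js; rewrite !mxE /t divfK ?subrr // gt_eqF.
Qed.


Lemma big_ord_max (F : nat -> R) n (G : 'I_n.+1 -> R) :
  \sum_(k < n.+1) G k = \sum_(k < n) G (lift ord_max k) + G ord_max.
Proof.
rewrite big_ord_recr /=; congr (_ + _); apply: eq_bigr => k _; congr G.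
apply: val_inj => /=. rewrite /bump.  rewrite leqNgt ltn_ord. done.
Qed.

Lemma affdep N (s : 'I_N.+1 -> 'rV[R]_N) (p : 'rV[R]_N) c :
  p != 0 -> (forall j, dot p (s j) = c) ->
  exists2 u : 'rV[R]_N.+1, u != 0 & \sum_j u 0 j = 0 /\ pt s u = 0.
Proof.
move=> p0 Hs.
pose A : 'M[R]_N.+1 := \matrix_(j, k) (match unlift ord_max k with Some k' => s j 0 k' | None => 1 end).
pose v : 'cV[R]_N.+1 := \col_k (match unlift ord_max k with Some k' => p 0 k' | None => - c end).
have Av : A *m v = 0.
  apply/colP => j; rewrite !mxE (@big_ord_max (fun _ => 0)) !mxE unlift_none.
  under eq_bigr do rewrite !mxE liftK.
  by rewrite -(Hs j) dotC mul1r subrr.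
have v0 : v != 0.
  apply/negP => /eqP v0; move/negP: p0; apply; apply/eqP/rowP => k.
  rewrite mxE; by have := congr1 (fun w : 'cV[R]_N.+1 => w (lift ord_max k) 0) v0; rewrite !mxE liftK.
have dA : \det A == 0.
  apply/negPn/negP => dA; move/negP: v0; apply; apply/eqP.
  have uA : A \in unitmx by rewrite unitmxE unitfE.
  by rewrite -(mulKmx uA v) Av mulmx0.
have [u u0 uA] := det0P dA.
exists u => //; split.
  have H := congr1 (fun w : 'rV[R]_N.+1 => w 0 ord_max) uA; rewrite /= !mxE in H.
  rewrite -[RHS]H; by apply: eq_bigr => j _; rewrite !mxE unlift_none mulr1.
apply/rowP => k; rewrite ptE mxE.
have H := congr1 (fun w : 'rV[R]_N.+1 => w 0 (lift ord_max k)) uA; rewrite /= !mxE in H.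
rewrite -[RHS]H.
by apply: eq_bigr => j _; rewrite !mxE liftK.
Qed.


Lemma dot_sumZ N (K : finType) (p : 'rV[R]_N) (mu : K -> R) (w : K -> 'rV[R]_N) :
  dot p (\sum_c mu c *: w c) = \sum_c mu c * dot p (w c).
Proof.
rewrite /dot (eq_bigr (fun k => \sum_c p 0 k * (mu c * w c 0 k))); last first.
  move=> k _; rewrite summxE mulr_sumr; apply: eq_bigr => c _; by rewrite mxE.
rewrite exchange_big /=; apply: eq_bigr => c _; rewrite mulr_sumr.
by apply: eq_bigr => k _; ring.
Qed.

Theorem colorful_cara N (K : finType) (C : 'I_N.+1 -> K -> 'rV[R]_N) :
  (forall i, exists mu : K -> R, (forall c, 0 <= mu c) /\ \sum_c mu c = 1 /\
      \sum_c mu c *: C i c = 0) ->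
  exists (f : 'I_N.+1 -> K) (l : 'rV[R]_N.+1), simp l /\ pt (fun i => C i (f i)) l = 0.
Proof.
move=> hC.
have [c0 _] : exists c : K, True.
  have [mu [_ [s1 _]]] := hC ord0.
  case: (pickP (fun _ : K => true)) => [c _|H]; first by exists c.
  by move: s1; rewrite big_pred0 // => /esym/eqP; rewrite oner_eq0.
case: (pselect (exists (f : 'I_N.+1 -> K) (l : 'rV[R]_N.+1),
   simp l /\ pt (fun i => C i (f i)) l = 0)) => // Hno.
exfalso.
pose sf (f : {ffun 'I_N.+1 -> K}) := fun i => C i (f i).
have [g Hg] := choice (fun f : {ffun 'I_N.+1 -> K} => minimizer (sf f)).
pose V f := dot (pt (sf f) (g f)) (pt (sf f) (g f)).
have [f0 _ Hf0] := @fin_min _ predT V [ffun=> c0] isT.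
have [sl0 minl0] := Hg f0.
set s := sf f0 in minl0 *; set l0 := g f0 in sl0 minl0 *.
set p := pt s l0 in minl0 *; set m0 := dot p p in minl0 *.
have m0pos : 0 < m0.
  rewrite lt_def dot_ge0 andbT; apply/eqP => /dot_eq0 p0; apply: Hno.
  by exists f0, l0; split.
have S1 : forall j, m0 <= dot p (s j).
  move=> j; rewrite leNgt; apply/negP => /step [t [/andP[t0 t1] Ht]].
  have tt : 0 <= t <= 1 by rewrite (ltW t0) t1.
  have := minl0 ((1 - t) *: l0 + t *: delta j) (simp_comb sl0 (simp_delta j) tt).
  by rewrite comb_pt -/p => H; have := lt_le_trans Ht H; rewrite ltxx.
have S2 : forall j, 0 < l0 0 j -> dot p (s j) = m0.
  have E : \sum_j l0 0 j * (dot p (s j) - m0) = 0.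
    under eq_bigr do rewrite mulrBr.
    by rewrite sumrB -dot_pt -mulr_suml sl0.2 mul1r subrr.
  move: E => /psumr_eq0P H j lj.
  have Hge : forall j, true -> 0 <= l0 0 j * (dot p (s j) - m0).
    by move=> k _; rewrite mulr_ge0 ?(sl0.1 k) // subr_ge0 S1.
  have := H Hge j isT.
  move/eqP; rewrite mulf_eq0 => /orP[/eqP l00|]; first by move: lj; rewrite l00 ltxx.
  by rewrite subr_eq0 => /eqP.
have [l1 [sl1 pl1 [i li]]] : exists l1, [/\ simp l1, pt s l1 = p & exists i, l1 0 i = 0].
  case: (pselect (exists i, l0 0 i = 0)) => [Hi | Hi]; first by exists l0.
  have Hpos : forall j, 0 < l0 0 j.
    move=> j; rewrite lt_def (sl0.1 j) andbT; apply/eqP => E; apply: Hi; by exists j.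
  have p0 : p != 0.
    apply/eqP => E; move: m0pos.
    by rewrite /m0 E /dot big1 ?ltxx // => k _; rewrite mxE mul0r.
  have [u u0 [su pu]] := affdep p0 (fun j => S2 j (Hpos j)).
  exact: reduce sl0 u0 su pu.
have [mu [mu0 [mu1 mus]]] := hC i.
have [c Hc] : exists c, dot p (C i c) < m0.
  apply/not_existsP => H.
  have E := dot_sumZ p mu (C i); rewrite mus in E.
  have : m0 <= \sum_c mu c * dot p (C i c).
    rewrite -[X in X <= _]mul1r -mu1 mulr_suml; apply: ler_sum => c _.
    by apply: ler_wpM2l => //; rewrite leNgt; apply/negP => Hc; apply: (H c).
  rewrite -E /dot big1 => [|k _]; last by rewrite mxE mulr0.
  by rewrite leNgt m0pos.
pose f1 := [ffun j => if j == i then c else f0 j].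
have ps1 : pt (sf f1) l1 = p.
  rewrite -pl1 /pt; apply: eq_bigr => j _; rewrite /s /sf ffunE.
  by case: eqP => [-> | //]; rewrite li !scale0r.
have [t [/andP[t0 t1] Ht]] := step Hc.
have [_ min1] := Hg f1.
have tt : 0 <= t <= 1 by rewrite (ltW t0) t1.
have := min1 ((1 - t) *: l1 + t *: delta i) (simp_comb sl1 (simp_delta i) tt).
have e1 : sf f1 i = C i c by rewrite /sf ffunE eqxx.
rewrite comb_pt ps1 e1 => H1.
have := Hf0 f1 isT; rewrite /V -/s -/l0 -/p -/m0 => H2.
by have := lt_le_trans (le_lt_trans H1 Ht) H2; rewrite ltxx.
Qed.

End CC.
Import Order.TTheory GRing.Theory Num.Theory.

Section Main.
Local Open Scope ring_scope.
Variables (r' d : nat).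
Local Notation m := (r' * d)%N.
Local Notation n := m.+1.
Local Notation r := r'.+1.
Definition XI := ('I_n * 'I_r * 'I_d)%type.

Lemma card_rd : #|{: 'I_r' * 'I_d}| = m.
Proof. by rewrite card_prod !card_ord. Qed.

Definition rb (t : 'I_m) : 'I_r' * 'I_d := enum_val (cast_ord (esym card_rd) t).

Lemma rb_inj : injective rb.
Proof. by move=> a b /enum_val_inj /cast_ord_inj. Qed.

Lemma rb_surj q : exists t, rb t = q.
Proof. by exists (cast_ord card_rd (enum_rank q)); rewrite /rb cast_ordK enum_rankK. Qed.

Definition jw (j : 'I_r') : 'I_r := lift ord_max j.

Definition wv (y : XI -> R) (i : 'I_n) (s : {perm 'I_r}) : 'rV[R]_m :=
  \row_t (y (i, s (jw (rb t).1), (rb t).2) - y (i, s ord_max, (rb t).2)).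

Definition Wk (y : XI -> R) (sg : 'I_n -> {perm 'I_r}) (k : 'I_n) : 'M[R]_m :=
  \matrix_(t, u) wv y (lift k u) (sg (lift k u)) 0 t.

Definition Am (y : XI -> R) (sg : 'I_n -> {perm 'I_r}) : 'M[R]_n :=
  \matrix_(s, i) match unlift ord0 s with Some t => wv y i (sg i) 0 t | None => 1 end.

Lemma polyf_det (q : nat) (F : (XI -> R) -> 'M[R]_q) :
  (forall a b, is_polyf (fun y => F y a b)) -> is_polyf (fun y => \det (F y)).
Proof.
move=> HF; apply: polyf_sum => s; apply: polyf_mul; last exact: polyf_prod.
have H1 := @polyf_const XI (if odd_perm s then Zneg xH else Zpos xH).
apply: (polyf_ext H1).
by move=> y; case: (odd_perm s) => /=; rewrite ?expr1 ?expr0.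
Qed.

Lemma polyf_wv i s t : is_polyf (fun y => wv y i s 0 t).
Proof.
apply: (@polyf_ext _ (fun y => y (i, s (jw (rb t).1), (rb t).2) + - y (i, s ord_max, (rb t).2))).
  by apply: polyf_add; [|apply: polyf_opp]; apply: polyf_var.
by move=> y; rewrite mxE.
Qed.

Lemma kern_det q (Q : 'M[R]_q) (v : 'cV[R]_q) : Q *m v = 0 -> v != 0 -> \det Q = 0.
Proof.
move=> Qv v0; apply/eqP/negPn/negP => dQ; move/negP: v0; apply; apply/eqP.
have uQ : Q \in unitmx by rewrite unitmxE unitfE.
by rewrite -(mulKmx uQ v) Qv mulmx0.
Qed.

Lemma detWk_ne0 sg k (X : XI -> R) : alg_indep X -> \det (Wk X sg k) != 0.
Proof.
move=> HX; apply/eqP; apply: (@polyf_nonvanish _ (fun y => \det (Wk y sg k)) _ _ X HX).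
  apply: polyf_det => a b; apply: (polyf_ext (polyf_wv (lift k b) (sg (lift k b)) a)).
  by move=> y; rewrite /Wk !mxE.
pose y0 (q : XI) : R := match unlift k q.1.1 with
  | Some u => ((q.1.2 == sg q.1.1 (jw (rb u).1)) && (q.2 == (rb u).2))%:R
  | None => 0 end.
exists y0.
have -> : Wk y0 sg k = 1%:M.
  apply/matrixP => t u; rewrite /Wk /wv !mxE /y0 /= liftK.
  rewrite !(inj_eq (@perm_inj _ _)) (inj_eq (@lift_inj _ _)) eq_sym (negbTE (neq_lift _ _)).
  rewrite /= subr0 -(inj_eq rb_inj).
  by case: (rb t) => [a b]; case: (rb u) => [a' b'] /=; rewrite xpair_eqE [a' == a]eq_sym.
rewrite det1; move/eqP; by rewrite oner_eq0.
Qed.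

Lemma detA_ne0 sg (X : XI -> R) : alg_indep X -> \det (Am X sg) != 0.
Proof.
move=> HX; apply/eqP; apply: (@polyf_nonvanish _ (fun y => \det (Am y sg)) _ _ X HX).
  apply: polyf_det => a b.
  case E: (unlift ord0 a) => [t|].
    apply: (polyf_ext (polyf_wv b (sg b) t)) => y; by rewrite /Am [RHS]mxE E.
  apply: (@polyf_ext _ (fun _ => IZR 1)); first exact: polyf_const.
  by move=> y; rewrite /Am mxE E.
pose y1 (q : XI) : R := match unlift ord0 q.1.1 with
  | Some u => ((q.1.2 == sg q.1.1 (jw (rb u).1)) && (q.2 == (rb u).2))%:R
  | None => 0 end.
exists y1.
have E : forall t i, Am y1 sg (lift ord0 t) i = (i == lift ord0 t)%:R.
  move=> t i; rewrite /Am /wv mxE liftK.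
  case: (unliftP ord0 i) => [u ->|->]; rewrite mxE /y1 /= ?liftK.
    2: by rewrite unlift_none subr0.
  rewrite /jw !(inj_eq (@perm_inj _ _)) !(inj_eq (@lift_inj _ _)). rewrite (negbTE (neq_lift _ _)).
  rewrite /= subr0 -(inj_eq rb_inj).
  case: (rb t) => [a b]; case: (rb u) => [a' b'] /=; rewrite xpair_eqE.
  by rewrite [a' == a]eq_sym [b' == b]eq_sym.
rewrite -det_tr det_trig.
  rewrite big1 => [|s _]; first by move/eqP; rewrite oner_eq0.
  rewrite mxE; case: (unliftP ord0 s) => [t ->|->]; first by rewrite E eqxx.
  by rewrite mxE unlift_none.
apply/is_trig_mxP => i j ij; rewrite mxE.
move: ij; case: (unliftP ord0 j) => [t ->|->] //= ij.
rewrite E; case: eqP => // Eij; by rewrite Eij ltnn in ij.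
Qed.


Lemma sum_wv (X : XI -> R) i : \sum_(s : {perm 'I_r}) wv X i s = 0.
Proof.
apply/rowP => t; rewrite summxE mxE; under eq_bigr do rewrite mxE.
rewrite sumrB; apply/eqP; rewrite subr_eq0; apply/eqP.
rewrite (reindex_inj (mulgI (tperm (jw (rb t).1) ord_max))) /=.
by apply: eq_bigr => s _; rewrite permM tpermL.
Qed.

Lemma core (M : {set 'I_n}) (p : 'I_n -> 'I_r -> 'I_d -> R)
  (Hind : alg_indep (fun t : 'I_n * 'I_r * 'I_d => p t.1.1 t.1.2 t.2)) :
  exists (sigma : 'I_n -> {perm 'I_r}) (z : 'I_d -> R) (alpha : 'I_n -> R),
    (forall (j : 'I_r) (c : 'I_d),
        z c = rsum (fun i : 'I_n => Rmult (alpha i) (p i (sigma i j) c))) /\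
    rsum alpha = R1 /\
    ((forall i, i \in M -> Rlt 0 (alpha i)) /\ (forall i, i \notin M -> Rlt (alpha i) 0)
     \/
     (forall i, i \in M -> Rlt (alpha i) 0) /\ (forall i, i \notin M -> Rlt 0 (alpha i))).
Proof.
pose X := (fun t : XI => p t.1.1 t.1.2 t.2).
pose eps i : R := if i \in M then 1 else -1.
have eps2 : forall i, eps i * eps i = 1.
  by move=> i; rewrite /eps; case: (i \in M); rewrite ?mulr1 ?mulrNN ?mulr1.
have epsn0 : forall i, eps i != 0.
  by move=> i; apply/eqP => E; have := eps2 i; rewrite E mul0r => /eqP; rewrite eq_sym oner_eq0.
pose C i s := eps i *: wv X i s.
have hC : forall i, exists mu : {perm 'I_r} -> R, (forall c, 0 <= mu c) /\ \sum_c mu c = 1 /\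
      \sum_c mu c *: C i c = 0.
  move=> i; exists (fun _ => (#|{perm 'I_r}|%:R)^-1).
  have cpos : (0 < #|{perm 'I_r}|)%N by apply/card_gt0P; exists 1%g.
  split; first by move=> _; rewrite invr_ge0 ler0n.
  split.
    rewrite sumr_const; set k := #|{perm 'I_r}|%:R; rewrite -mulr_natl.
    have -> : (#|(xpredT : pred {perm 'I_r})|)%:R = k by [].
    by rewrite mulfV // pnatr_eq0 -lt0n cpos.
  rewrite -scaler_sumr /C -scaler_sumr sum_wv !scaler0 //.
have [f [l [[l0 l1] pl]]] := colorful_cara hC.
pose g i := eps i * l 0 i.
have Hker : forall t, \sum_i g i * wv X i (f i) 0 t = 0.
  move=> t; have H := congr1 (fun w : 'rV[R]_m => w 0 t) pl; rewrite /= ptE mxE in H.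
  rewrite -[RHS]H; by apply: eq_bigr => i _; rewrite /C [in RHS]mxE /g; ring.
have lnz : exists i, l 0 i != 0.
  apply/not_existsP => H; move: l1; rewrite big1 => [|i _]; last by apply/eqP/negPn/negP/H.
  by move/eqP; rewrite eq_sym oner_eq0.
have G1 : forall k, l 0 k != 0.
  move=> k; apply/negP => /eqP lk.
  pose v : 'cV[R]_m := \col_u g (lift k u).
  have : Wk X f k *m v = 0.
    apply/colP => t; rewrite !mxE -[RHS](Hker t) (bigD1_ord k) //= /g lk mulr0 mul0r add0r.
    by apply: eq_bigr => u _; rewrite !mxE mulrC.
  move/kern_det => H; move/eqP: (detWk_ne0 f k Hind); apply; apply: H.
  have [i li] := lnz; apply/negP => /eqP v0.
  case: (unliftP k i) => [u Ei|Ei]; last by move: li; rewrite Ei lk eqxx.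
  have := congr1 (fun w : 'cV[R]_m => w u 0) v0; rewrite !mxE /g -Ei => /eqP.
  by rewrite mulf_eq0 (negbTE (epsn0 _)) (negbTE li).
have lpos : forall i, 0 < l 0 i by move=> i; rewrite lt_def G1 l0.
set S := \sum_i g i.
have S0 : S != 0.
  apply/eqP => S0.
  pose v : 'cV[R]_n := \col_i g i.
  have : Am X f *m v = 0.
    apply/colP => s; rewrite !mxE; case: (unliftP ord0 s) => [t ->|->].
      rewrite -[RHS](Hker t); apply: eq_bigr => i _; by rewrite !mxE liftK mulrC /wv mxE.
    rewrite -[RHS]S0; apply: eq_bigr => i _; by rewrite !mxE unlift_none mul1r.
  move/kern_det => H; move/eqP: (detA_ne0 f Hind); apply; apply: H.
  apply/negP => /eqP v0.
  have := congr1 (fun w : 'cV[R]_n => w ord0 0) v0; rewrite !mxE /g => /eqP.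
  by rewrite mulf_eq0 (negbTE (epsn0 _)) (negbTE (G1 _)).
pose alpha i := g i / S.
exists f, (fun c => \sum_i alpha i * p i (f i ord_max) c), alpha.
split.
  move=> j c; rewrite rsumE.
  case: (unliftP ord_max j) => [j' ->|->] //.
  have [t Et] := rb_surj (j', c).
  apply/eqP; rewrite eq_sym -subr_eq0 -sumrB.
  rewrite (eq_bigr (fun i => (g i * wv X i (f i) 0 t) / S)).
    by rewrite -mulr_suml Hker mul0r.
  move=> i _; rewrite /wv mxE Et /X /= /jw /alpha; rewrite -/(GRing.mul (g i / S) _); change (Rmult (g i / S) (p i (f i (lift ord_max j')) c)) with (g i / S * p i (f i (lift ord_max j')) c); rewrite mulrBr mulrBl; congr (_ - _); by rewrite [RHS]mulrAC.
split.
  by rewrite rsumE /alpha -mulr_suml divff.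
have [Spos|Sneg] := ltrP 0 S.
  left; split => i Hi; apply/RltP; rewrite /alpha /g /eps ?Hi ?(negbTE Hi).
    by rewrite mul1r divr_gt0.
  by rewrite mulN1r mulNr oppr_lt0 divr_gt0.
right; have Sn : S < 0 by rewrite lt_neqAle S0 Sneg.
split => i Hi; apply/RltP; rewrite /alpha /g /eps ?Hi ?(negbTE Hi).
  by rewrite mul1r -oppr_gt0 -mulrN -invrN divr_gt0 // oppr_gt0.
by rewrite mulN1r mulNr -mulrN -invrN divr_gt0 // oppr_gt0.
Qed.

End Main.

Unset Implicit Arguments.

(* Points: p i k is the k-th point of F_{i+1}, a point of R^d given by its
   coordinates p i k c, c : 'I_d.  A colourful partition is given by
   permutations sigma i of 'I_r:  x_{i,j} := p i (sigma i j),  A_j = {x_{i,j} | i}. *)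
Theorem mainTheorem6 (r d n : nat) (Hr : (2 <= r)%N) (Hd : (1 <= d)%N)
  (Hn : n = ((r - 1) * d + 1)%N)
  (p : 'I_n -> 'I_r -> 'I_d -> R)
  (Hdisj : forall (i i' : 'I_n) (k k' : 'I_r), p i k = p i' k' -> i = i' /\ k = k')
  (Hind : alg_indep (fun t : 'I_n * 'I_r * 'I_d => p t.1.1 t.1.2 t.2))
  (M : {set 'I_n}) :
  exists (sigma : 'I_n -> {perm 'I_r}) (z : 'I_d -> R) (alpha : 'I_n -> R),
    (forall (j : 'I_r) (c : 'I_d),
        z c = rsum (fun i : 'I_n => Rmult (alpha i) (p i (sigma i j) c))) /\
    rsum alpha = R1 /\
    ((forall i, i \in M -> Rlt 0 (alpha i)) /\ (forall i, i \notin M -> Rlt (alpha i) 0)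
     \/
     (forall i, i \in M -> Rlt (alpha i) 0) /\ (forall i, i \notin M -> Rlt 0 (alpha i))).
Proof.
move: Hdisj Hind; case: r Hr Hn p => [//|r'] _ Hn p _ Hind.
have e : n = (r' * d).+1 by rewrite Hn subn1 /= addn1.
clear Hn; subst n. exact: core.
Qed.
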